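(* Let $q$ be a positive integer and let $\mathcal{D}_1,\mathcal{D}_2$ be nonempty finite subsets of $[q]\times 2^{[q]}$ such that every $(b,B)\in\mathcal{D}_1\cup\mathcal{D}_2$ has $|B|\ge 2$. Then the following are equivalent: (1) $\mathcal{E}_{\mathcal{D}_1}=\mathcal{E}_{\mathcal{D}_2}$; (2) ${\sf Div}(\mathcal{E}_{\mathcal{D}_1})={\sf Div}(\mathcal{E}_{\mathcal{D}_2})$; (3) $\overline{\mathcal{D}_1}=\overline{\mathcal{D}_2}$; (4) $\min(\overline{\mathcal{D}_1})=\min(\overline{\mathcal{D}_2})$.
   Context: Divisibility relations. Let $\Lambda$ be a finite nonempty set and $U=\{u_i:i\in\Lambda\}$ a set of monomials in a polynomial ring over a field, indexed so that $u_i=u_j$ implies $i=j$. A divisibility relation on $U$ is a pair $(b,B)$ with $b\in\Lambda$ and $\emptyset\ne B\subseteq\Lambda$ such that $u_b\mid \mathrm{lcm}(u_i: i\in B)$; ${\sf Div}(U)$ is the set of all of them. A pair $(b,B)$ is trivial if $b\in B$. $(b,B)^{\sf ex}=\{(b,C): B\subseteq C\subseteq \Lambda\}$. $(b,B)\circ(c,C)=(b,(B\smallsetminus\{c\})\cup C)$. For $\mathcal{D}\subseteq\Lambda\times 2^\Lambda$: $\mathcal{D}^\circ$ is the set of all compositions $(b_1,B_1)\circ\cdots\circ(b_s,B_s)$ with $s\ge1$, $(b_i,B_i)\in\mathcal{D}$, with every possible bracketing; $\mathcal{D}^{\sf ex}=\bigcup_{(b,B)\in\mathcal{D}}(b,B)^{\sf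 ex}$; $\Lambda^{\sf triv}=\{(b,B): b\in B\}$; $\overline{\mathcal{D}}=(\mathcal{D}^\circ)^{\sf ex}\cup\Lambda^{\sf triv}$. $\min(\mathcal{D})$ is the set of nontrivial $(b,B)\in\mathcal{D}$ such that no $(b,C)\in\mathcal{D}$ has $C\subsetneq B$. Here $\Lambda=[q]$. $\mathcal{D}$-extremal ideals. Let $\mathsf k$ be a field and $S_{[q]}=\mathsf k[y_A:\emptyset\ne A\subseteq[q]]$. For $\mathcal{D}\subseteq [q]\times(2^{[q]}\smallsetminus\{\emptyset\})$ let $Q(\mathcal{D})=\{A\subseteq[q]: A\ne\emptyset,\ A\cap B\ne\emptyset \text{ for all }(b,B)\in\mathcal{D}\text{ with } b\in A\}$, $\varepsilon_{\mathcal{D},i}=\prod_{A\in Q(\mathcal{D}),\, i\in A} y_A$, and $\mathcal{E}_{\mathcal{D}}=(\varepsilon_{\mathcal{D},1},\ldots,\varepsilon_{\mathcal{D},q})\subseteq S_{[q]}$. ${\sf Div}(\mathcal{E}_{\mathcal{D}})$ denotes ${\sf Div}(\{\varepsilon_{\mathcal{D},1},\ldots,\varepsilon_{\mathcal{D},q}\})$ with indexing set $[q]$. *)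

(* Defs.v *)
From HB Require Import structures.
From mathcomp Require Import all_boot all_order all_algebra.
From mathcomp Require Import mpoly.
Set Implicit Arguments. Unset Strict Implicit. Unset Printing Implicit Defensive.
Import GRing.Theory.
Local Open Scope ring_scope.

Definition pairq (q : nat) := ('I_q * {set 'I_q})%type.

Definition compose (q : nat) (x y : pairq q) : pairq q :=
  (x.1, (x.2 :\ y.1) :|: y.2).

(* D^o : all compositions of s >= 1 elements of D, with every bracketing;
   i.e. the closure of D under binary composition. *)
Inductive comp_closure (q : nat) (D : {set pairq q}) : pairq q -> Prop :=
| cc_base x : x \in D -> comp_closure D x
| cc_comp x y : comp_closure D x -> comp_closure D y ->
    comp_closure D (compose x y).

Definition closureD (q : nat) (D : {set pairq q}) (x : pairq q) : Prop :=
  (exists2 y : pairq q, comp_closure D y & (y.1 = x.1 /\ y.2 \subset x.2))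
  \/ x.1 \in x.2.

Definition minD (q : nat) (P : pairq q -> Prop) (x : pairq q) : Prop :=
  P x /\ x.1 \notin x.2 /\
  ~ (exists C : {set 'I_q}, P (x.1, C) /\ C \proper x.2).

(* nonempty subsets of [q], indexing the variables y_A of S_[q] *)
Definition NE (q : nat) := {A : {set 'I_q} | A != set0}.
Definition nvars (q : nat) := #|{: NE q}|.

Definition yvar (k : fieldType) (q : nat) (A : NE q) : {mpoly k[nvars q]} :=
  'X_(enum_rank A).

Definition QD (q : nat) (D : {set pairq q}) (A : {set 'I_q}) : bool :=
  (A != set0) &&
  [forall x in D, (x.1 \in A) ==> (A :&: x.2 != set0)].

Definition eps (k : fieldType) (q : nat) (D : {set pairq q}) (i : 'I_q)
  : {mpoly k[nvars q]} :=
  \prod_(A : NE q | QD D (val A) && (i \in val A)) yvar k A.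

Definition in_ED (k : fieldType) (q : nat) (D : {set pairq q})
  (p : {mpoly k[nvars q]}) : Prop :=
  exists h : 'I_q -> {mpoly k[nvars q]}, p = \sum_(i < q) h i * eps k D i.

Definition mdvd (k : fieldType) (n : nat) (f g : {mpoly k[n]}) : Prop :=
  exists h : {mpoly k[n]}, g = h * f.

Definition lcm_eps (k : fieldType) (q : nat) (D : {set pairq q})
  (B : {set 'I_q}) : {mpoly k[nvars q]} :=
  'X_[\big[@mlcm _/0%MM]_(i in B) mlead (eps k D i)].

Definition DivE (k : fieldType) (q : nat) (D : {set pairq q}) (x : pairq q)
  : Prop :=
  x.2 != set0 /\ mdvd (eps k D x.1) (lcm_eps k D x.2).

(* Main.v *)
Require Import Defs.
From HB Require Import structures.
From mathcomp Require Import all_boot all_order all_algebra.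
From mathcomp Require Import mpoly.
From Stdlib Require Import Classical ClassicalDescription.
Set Implicit Arguments. Unset Strict Implicit. Unset Printing Implicit Defensive.
Import GRing.Theory.
Local Open Scope ring_scope.

Definition mexp (q : nat) (D : {set pairq q}) (i : 'I_q) : 'X_{1..nvars q} :=
  (\sum_(A : NE q | QD D (val A) && (i \in val A)) U_(enum_rank A))%MM.

Lemma eps_X (k : fieldType) (q : nat) (D : {set pairq q}) (i : 'I_q) : eps k D i = 'X_[mexp D i].
Proof. by rewrite /eps /mexp (big_morph (@mpolyX _ k) (@mpolyXD _ k) (@mpolyX0 _ k)). Qed.

Lemma mlead_eps (k : fieldType) (q : nat) (D : {set pairq q}) (i : 'I_q) : mlead (eps k D i) = mexp D i.
Proof. by rewrite eps_X mleadXm. Qed.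

Lemma mexpE (q : nat) (D : {set pairq q}) (i : 'I_q) (j : 'I_(nvars q)) :
  mexp D i j = (QD D (val (enum_val j)) && (i \in val (enum_val j))).
Proof.
rewrite /mexp mnm_sumE.
under eq_bigr => A _ do rewrite mnm1E.
set a := enum_val j.
have hj : forall A : NE q, (enum_rank A == j) = (A == a).
  by move=> A; apply/eqP/eqP => [e|->]; rewrite ?/a -?e ?enum_rankK ?enum_valK.
under eq_bigr => A _ do rewrite hj.
case: (boolP (QD D (val a) && (i \in val a))) => Ha.
  rewrite (bigD1 a) //= eqxx big1 // => A /andP [_ /negbTE ->] //.
rewrite big1 // => A HA; case: eqP => // eA; move: HA; rewrite eA (negbTE Ha).
by [].
Qed.


Definition DivQ (q : nat) (D : {set pairq q}) (x : pairq q) : Prop :=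
  x.2 != set0 /\ forall A : {set 'I_q}, QD D A -> x.1 \in A -> A :&: x.2 != set0.

Lemma lcm_comp (q : nat) (D : {set pairq q}) (B : {set 'I_q}) (j : 'I_(nvars q)) :
  (\big[@mlcm _/0%MM]_(i in B) mexp D i) j = (\max_(i in B) mexp D i j)%N.
Proof.
by apply: (big_morph (fun m : 'X_{1..nvars q} => m j)) => [x y|]; rewrite mnmE.
Qed.

Lemma QD_ne (q : nat) (D : {set pairq q}) A : QD D A -> A != set0.
Proof. by case/andP. Qed.

Lemma DivE_DivQ (k : fieldType) (q : nat) (D : {set pairq q}) x :
  DivE k D x <-> DivQ D x.
Proof.
rewrite /DivE /lcm_eps /mdvd.
under eq_bigr do rewrite mlead_eps.
set L := (\big[_/_]_(i in _) _)%MM.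
split.
- case=> hB [h e]; split=> // A QA bA.
  have hn : h != 0.
    apply/negP=> /eqP h0; move: e; rewrite h0 mul0r => /(congr1 (fun p => p@_L)).
    by rewrite mcoeffX eqxx mcoeff0 => /eqP; rewrite oner_eq0.
  have hX : ('X_[mexp D x.1] : {mpoly k[nvars q]}) != 0.
    apply/negP=> /eqP h0; move: (congr1 (fun p => p@_(mexp D x.1)) h0).
    by rewrite /= mcoeffX eqxx mcoeff0 => /eqP; rewrite oner_eq0.
  have hL : L = (mlead h + mexp D x.1)%MM.
    by have := congr1 (@mlead _ k) e; rewrite eps_X mleadXm mleadM // mleadXm.
  have le : (mexp D x.1 <= L)%MM by rewrite hL lem_addl.
  pose a : NE q := exist _ A (QD_ne QA).
  have := mnm_lepP le (enum_rank a).
  rewrite mexpE lcm_comp enum_rankK /= QA bA /=.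
  apply: contraTneq => AB.
  rewrite -ltnNge ltnS; apply/bigmax_leqP => i iB; rewrite mexpE enum_rankK /=.
  case: andP => // -[_ iA].
  have : i \in A :&: x.2 by rewrite inE iA.
  by rewrite AB inE.
- case=> hB hQ; split=> //.
  have le : (mexp D x.1 <= L)%MM.
    apply/mnm_lepP => j; rewrite mexpE lcm_comp.
    case: andP => //= -[QA bA].
    have := hQ _ QA bA; case/set0Pn => i; rewrite inE => /andP [iA iB].
    by apply: (leq_trans _ (leq_bigmax_cond _ iB)); rewrite mexpE QA iA.
  exists 'X_[(L - mexp D x.1)%MM].
  by rewrite eps_X -mpolyXD submK.
Qed.


Section Comb.
Variables (q : nat) (D : {set pairq q}).
Hypothesis hD : forall x, x \in D -> x.2 != set0.

Lemma cc_ne y : comp_closure D y -> y.2 != set0.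
Proof.
elim=> [x /hD //|x z _ _ _ hy].
by case/set0Pn: hy => e he; apply/set0Pn; exists e; rewrite /compose /= inE he orbT.
Qed.

Lemma cc_sound y : comp_closure D y -> DivQ D y.
Proof.
move=> c; split; first exact: cc_ne.
elim: c => [x xD|x z _ hx2 _ hy2] A QA bA.
- by case/andP: QA => _ /forallP /(_ x); rewrite xD bA.
- have /set0Pn [e] := hx2 A QA bA; rewrite inE => /andP [eA ex].
  case: (eqVneq e z.1) => [ee|ne].
    have /set0Pn [f] := hy2 A QA (ltac:(by rewrite -ee)); rewrite inE => /andP [fA fy].
    by apply/set0Pn; exists f; rewrite /compose /= !inE fA fy !orbT.
  by apply/set0Pn; exists e; rewrite /compose /= !inE eA ne ex.
Qed.

Lemma cl_sound x : closureD D x -> DivQ D x.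
Proof.
case=> [[y cy [e1 e2]]|bx].
  have [ne h] := cc_sound cy; split.
    by apply: contraNneq ne => e0; by rewrite -subset0 -e0.
  move=> A QA bA; have /set0Pn [f] := h A QA (ltac:(by rewrite e1)).
  by rewrite inE => /andP [fA fy]; apply/set0Pn; exists f; rewrite inE fA (subsetP e2).
split; first by apply/set0Pn; exists x.1.
by move=> A _ bA; apply/set0Pn; exists x.1; rewrite inE bA.
Qed.

Lemma cl_up x (C : {set 'I_q}) : closureD D x -> x.2 \subset C -> closureD D (x.1, C).
Proof.
case=> [[y cy [e1 e2]]|bx] s.
  by left; exists y => //; split => //; apply: subset_trans s.
by right; rewrite /= (subsetP s).
Qed.

Lemma cl_comp x y : closureD D x -> closureD D y -> closureD D (compose x y).
Proof.
case=> [[x0 cx [ex1 ex2]]|bx].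
- have sub1 : x0.2 :\ y.1 \subset (compose x y).2.
    apply/subsetP => e; rewrite /compose /= !inE => /andP [-> /(subsetP ex2) ->].
    by [].
  case=> [[y0 cy [ey1 ey2]]|by_].
  + case: (boolP (y.1 \in x0.2)) => yx.
      left; exists (compose x0 y0); first exact: cc_comp.
      split => //; rewrite /compose /= ey1; apply/subsetP => e; rewrite !inE.
      case/orP => [/andP [ne ex]|ey]; first by rewrite ne (subsetP ex2).
      by rewrite (subsetP ey2) ?orbT.
    left; exists x0 => //; split => //; apply: subset_trans sub1.
    by apply/subsetP => e ex; rewrite !inE ex andbT; apply: contraNneq yx => <-.
  + left; exists x0 => //; split => //; apply/subsetP => e ex.
    case: (eqVneq e y.1) => [->|ne].
      by rewrite /compose /= inE by_ orbT.
    by rewrite /compose /= !inE ne (subsetP ex2).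
- move=> cy; case: (eqVneq x.1 y.1) => [e|ne].
    have := cl_up cy (_ : y.2 \subset (compose x y).2).
    rewrite /compose /= -e; apply; apply/subsetP => f fy; by rewrite inE fy orbT.
  by right; rewrite /compose /= !inE ne bx.
Qed.

Lemma cl_collapse (c : 'I_q) (B C : {set 'I_q}) :
  (forall j, j \in C -> closureD D (j, B)) ->
  forall X, closureD D (c, X) -> X \subset C :|: B -> closureD D (c, B).
Proof.
move=> hC X; move: {2}#|X :\: B| (leqnn #|X :\: B|) => n.
elim: n X => [|n IH] X hn cX sX.
  have : X :\: B == set0 by rewrite -cards_eq0 -leqn0.
  rewrite setD_eq0 => sXB; exact: (cl_up cX sXB).
case: (boolP (X \subset B)) => sXB; first exact: (cl_up cX sXB).
have [j jX jB] : exists2 j, j \in X & j \notin B.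
  case/subsetPn: sXB => j jX jB; by exists j.
have jC : j \in C by move: (subsetP sX j jX); rewrite inE (negbTE jB) orbF.
have cc := cl_comp cX (hC j jC); rewrite /compose /= in cc.
apply: (IH _ _ cc).
  have : ((X :\ j) :|: B) :\: B \proper X :\: B.
    apply/properP; split.
      apply/subsetP => e; rewrite !inE => /andP [eB /orP [/andP [_ ->]|eB']]; first by rewrite eB.
      by rewrite eB' in eB.
    by exists j; rewrite !inE ?jX ?jB // eqxx.
  by move/proper_card => lt; rewrite -ltnS (leq_trans lt).
apply/subsetP => e; rewrite !inE => /orP [/andP [_ eX]|->]; last by rewrite orbT.
by move: (subsetP sX e eX); rewrite inE.
Qed.

Definition decP (P : Prop) : bool := if excluded_middle_informative P then true else false.
Lemma decPE P : decP P <-> P.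
Proof. by rewrite /decP; case: excluded_middle_informative. Qed.

Lemma cl_complete x : DivQ D x -> closureD D x.
Proof.
case: x => b B [/= hB hQ].
apply: NNPP => ncl.
pose A := [set c | ~~ decP (closureD D (c, B))].
have bA : b \in A by rewrite inE; apply/negP => /decPE.
have QA : QD D A.
  apply/andP; split; first by apply/set0Pn; exists b.
  apply/forallP => y; apply/implyP => yD; apply/implyP => y1A.
  apply/negP => /eqP e.
  have hC : forall j, j \in y.2 -> closureD D (j, B).
    move=> j jy; apply: NNPP => nj.
    have : j \in A :&: y.2 by rewrite !inE jy andbT; apply/negP => /decPE.
    by rewrite e inE.
  have cy : closureD D (y.1, y.2).
    by left; exists y; [exact: cc_base | split].
  have h := @cl_collapse y.1 B y.2 hC y.2 cy (subsetUl _ _).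
  by move: y1A; rewrite inE => /negP; apply; apply/decPE.
have := hQ A QA bA; case/set0Pn => j; rewrite !inE => /andP [jA jB].
by move/negP: jA; apply; apply/decPE; right.
Qed.

End Comb.


Lemma min_cl (q : nat) (D : {set pairq q}) (x : pairq q) :
  closureD D x <-> (x.1 \in x.2 \/
    exists C, minD (closureD D) (x.1, C) /\ C \subset x.2).
Proof.
split; last first.
  case=> [bx|[C [[cC _] sC]]]; first by right.
  by case: x cC sC => b B cC sC; exact: (cl_up cC sC).
case: (boolP (x.1 \in x.2)) => bx cx; first by left.
right.
suff : forall n (C : {set 'I_q}), (#|C| <= n)%N -> closureD D (x.1, C) ->
  x.1 \notin C -> exists C', minD (closureD D) (x.1, C') /\ C' \subset C.
  by case: x bx cx => b B bx cx; apply => //.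
elim=> [|n IH] C hn cC bC.
  exists C; split => //; split => //; split => // -[C' [_ /proper_card]].
  by move: hn; rewrite leqn0 => /eqP ->.
case: (classic (exists C', closureD D (x.1, C') /\ C' \proper C)).
  case=> C' [cC' pC'].
  have [||C'' [m s]] := IH C' _ cC'.
  - by have := proper_card pC'; move=> lt; rewrite -ltnS (leq_trans lt).
  - by apply: contra bC; apply: (subsetP (proper_sub pC')).
  by exists C''; split => //; apply: (subset_trans s (proper_sub pC')).
by move=> nC; exists C; split => //; split => //; split.
Qed.

Definition Tset (q : nat) (D : {set pairq q}) (i : 'I_q) (A : {set 'I_q}) : bool :=
  QD D A && (i \in A).

Definition vS (k : fieldType) (q : nat) (S : {set 'I_q} -> bool) : 'I_(nvars q) -> k :=
  fun j => (S (val (enum_val j)))%:R.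

Lemma eval_eps (k : fieldType) (q : nat) (D : {set pairq q}) (i : 'I_q) (S : {set 'I_q} -> bool) :
  (eps k D i).@[vS k S] = (\prod_(A : NE q | Tset D i (val A)) (S (val A))%:R).
Proof.
rewrite /eps (big_morph _ (mevalM _) (meval1 _)); apply: eq_bigr => A _.
by rewrite /yvar mevalXU /vS enum_rankK.
Qed.

Lemma eval_eps1 (k : fieldType) (q : nat) (D : {set pairq q}) (i : 'I_q) (S : {set 'I_q} -> bool) :
  (forall A, Tset D i A -> S A) -> (eps k D i).@[vS k S] = 1.
Proof.
by move=> h; rewrite eval_eps big1 // => A /h ->.
Qed.

Lemma eval_eps0 (k : fieldType) (q : nat) (D : {set pairq q}) (i : 'I_q) (S : {set 'I_q} -> bool) A :
  Tset D i A -> ~~ S A -> (eps k D i).@[vS k S] = 0.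
Proof.
move=> TA nSA; rewrite eval_eps.
have ne : A != set0 by case/andP: TA => /andP [].
rewrite (bigD1 (exist _ A ne : NE q)) //= (negbTE nSA) mul0r //.
Qed.

Lemma ED_eval (k : fieldType) (q : nat) (D : {set pairq q}) p v :
  in_ED D p -> (forall i, (eps k D i).@[v] = 0) -> p.@[v] = 0.
Proof.
case=> h ->; move=> h0; rewrite (big_morph _ (mevalD _) (meval0 _)) big1 // => i _.
by rewrite mevalM h0 mulr0.
Qed.

Lemma eps_in (k : fieldType) (q : nat) (D : {set pairq q}) i : in_ED D (eps k D i).
Proof.
exists (fun j => (j == i)%:R); rewrite (bigD1 i) //= eqxx mul1r big1 ?addr0 //.
by move=> j /negbTE ->; rewrite mul0r.
Qed.

Lemma ideal_sub (k : fieldType) (q : nat) (D1 D2 : {set pairq q}) i :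
  in_ED D1 (eps k D2 i) -> exists j, forall A, Tset D1 j A -> Tset D2 i A.
Proof.
move=> hin; apply: NNPP => hn.
have hj : forall j, exists2 A, Tset D1 j A & ~~ Tset D2 i A.
  move=> j; apply: NNPP => nj; apply: hn; exists j => A TA.
  apply: NNPP => nT; apply: nj; exists A => //; exact/negP.
have H0 := ED_eval (v := vS k (Tset D2 i)) hin.
have : (1 : k) = 0.
  rewrite -(@eval_eps1 k q D2 i (Tset D2 i)) //; apply: H0 => j.
  by have [A TA nT] := hj j; apply: eval_eps0 TA nT.
by move/eqP; rewrite oner_eq0.
Qed.

Lemma cofin (q : nat) (D : {set pairq q}) (i l : 'I_q) :
  (forall x, x \in D -> (2 <= #|x.2|)%N) -> l != i -> QD D (~: [set i]).
Proof.
move=> h2 li; apply/andP; split.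
  by apply/set0Pn; exists l; rewrite !inE.
apply/forallP => x; apply/implyP => xD; apply/implyP => _.
apply/negP => /eqP e.
have : x.2 \subset [set i].
  apply/subsetP => e' e'x; rewrite inE; apply/negPn/negP => ne.
  have : e' \in ~: [set i] :&: x.2 by rewrite !inE ne.
  by rewrite e inE.
by move/subset_leq_card; rewrite cards1 leqNgt (h2 _ xD).
Qed.

Lemma QD_sub (k : fieldType) (q : nat) (D1 D2 : {set pairq q}) :
  (forall x, x \in D1 -> (2 <= #|x.2|)%N) ->
  (forall x, x \in D2 -> (2 <= #|x.2|)%N) ->
  (forall p : {mpoly k[nvars q]}, in_ED D1 p <-> in_ED D2 p) ->
  forall A, QD D1 A -> QD D2 A.
Proof.
move=> h1 h2 H A QA.
have [i iA] : exists i, i \in A by case/andP: QA => /set0Pn.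
have [j hj] := ideal_sub (proj2 (H _) (eps_in k D2 i)).
have [l hl] := ideal_sub (proj1 (H _) (eps_in k D1 j)).
have li : l = i.
  apply/eqP; apply: contraT => ne.
  have T2 : Tset D2 l (~: [set i]) by rewrite /Tset (cofin h2 ne) !inE.
  by have := hj _ (hl _ T2); rewrite /Tset !inE eqxx andbF.
subst l.
have ji : j = i.
  apply/eqP; apply: contraT => ne.
  have ne' : i != j by rewrite eq_sym.
  have T2 : Tset D2 i (~: [set j]) by rewrite /Tset (cofin h2 ne') !inE.
  by have := hl _ T2; rewrite /Tset !inE eqxx andbF.
subst j.
by have := hj A; rewrite /Tset QA iA => /(_ isT) /andP [].
Qed.


Lemma ne_of2 (q : nat) (D : {set pairq q}) :
  (forall x, x \in D -> (2 <= #|x.2|)%N) -> forall x, x \in D -> x.2 != set0.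
Proof.
move=> h x /h; apply: contraTneq => ->; by rewrite cards0.
Qed.

Lemma cl_DivE (k : fieldType) (q : nat) (D : {set pairq q}) :
  (forall x, x \in D -> x.2 != set0) -> forall x, closureD D x <-> DivE k D x.
Proof.
move=> hD x; rewrite DivE_DivQ; split; [exact: cl_sound | exact: cl_complete].
Qed.

Lemma QD_div (q : nat) (D : {set pairq q}) :
  (forall x, x \in D -> x.2 != set0) -> forall A,
  QD D A <-> (A != set0 /\ forall x, DivQ D x -> x.1 \in A -> A :&: x.2 != set0).
Proof.
move=> hD A; split.
  by move=> QA; split; [case/andP: QA | move=> x [_ h]; apply: h].
case=> ne h; apply/andP; split => //; apply/forallP => x; apply/implyP => xD.
apply/implyP => xA; apply: h xA; apply: cc_sound => //; exact: cc_base.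
Qed.

Lemma DivQ_eq (q : nat) (D1 D2 : {set pairq q}) :
  (forall A, QD D1 A <-> QD D2 A) -> forall x, DivQ D1 x <-> DivQ D2 x.
Proof.
move=> E x; split; case=> ne h; split => // A QA; apply: h; exact/E.
Qed.

Lemma ED_eq (k : fieldType) (q : nat) (D1 D2 : {set pairq q}) :
  (forall A, QD D1 A <-> QD D2 A) ->
  forall p : {mpoly k[nvars q]}, in_ED D1 p <-> in_ED D2 p.
Proof.
move=> E.
have Ee : forall i, eps k D1 i = eps k D2 i.
  move=> i; apply: eq_bigl => A; congr andb; apply/idP/idP => /E //.
move=> p; split; case=> h e; exists h; rewrite e; apply: eq_bigr => i _; by rewrite Ee.
Qed.

Unset Implicit Arguments. Set Strict Implicit.
Local Close Scope ring_scope.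

Theorem theorem3p11 (k : fieldType) (q : nat) (D1 D2 : {set pairq q}) :
  (0 < q)%N ->
  D1 != set0 -> D2 != set0 ->
  (forall x : pairq q, x \in D1 :|: D2 -> (2 <= #|x.2|)%N) ->
  [/\ ((forall p : {mpoly k[nvars q]}, in_ED D1 p <-> in_ED D2 p) <->
        (forall x, DivE k D1 x <-> DivE k D2 x)),
      ((forall x, DivE k D1 x <-> DivE k D2 x) <->
        (forall x, closureD D1 x <-> closureD D2 x))
    & ((forall x, closureD D1 x <-> closureD D2 x) <->
        (forall x, minD (closureD D1) x <-> minD (closureD D2) x))].
Proof.
move=> _ _ _ h.
have h1 : forall x, x \in D1 -> (2 <= #|x.2|)%N by move=> x xD; apply: h; rewrite inE xD.
have h2 : forall x, x \in D2 -> (2 <= #|x.2|)%N by move=> x xD; apply: h; rewrite inE xD orbT.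
have n1 := ne_of2 h1; have n2 := ne_of2 h2.
split.
- split => H.
    have E : forall A, QD D1 A <-> QD D2 A.
      move=> A; split; apply: QD_sub => //; move=> p; split; apply H.
    by move=> x; rewrite !DivE_DivQ; apply: DivQ_eq.
  apply: ED_eq => A; rewrite (QD_div n1) (QD_div n2).
  split; case=> ne hh; split => // x; [rewrite -!(DivE_DivQ k) -H | rewrite -!(DivE_DivQ k) H];
    rewrite DivE_DivQ; apply: hh.
- split => H x.
    by rewrite (cl_DivE k n1) (cl_DivE k n2).
  by rewrite -(cl_DivE k n1) -(cl_DivE k n2).
- split => H x.
    rewrite /minD; split; case=> [c1 [c2 c3]]; (split; [exact/H | split => //]);
      move=> [C [cC pC]]; apply: c3; exists C; split => //; exact/H.
  rewrite min_cl [X in _ <-> X]min_cl.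
  split; case=> [b|[C [m s]]]; try by left.
    by right; exists C; split => //; apply/H.
  by right; exists C; split => //; apply/H.
Qed.
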